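(* Let $U,W$ be smooth on $\mathbb R^d$ with $\nu(dx)=e^{-W}dx$ and $\mu(dx)=e^{-(U+W)}dx$ probability measures, and assume $\nu$ satisfies a weighted Poincaré inequality with weight $\omega$ and constant $C_{P,\omega}(\nu)$. Suppose there exists $\varepsilon>0$ such that $s:=\sup_xC_{P,\omega}(\nu)\frac{1+\varepsilon}{4}|\nabla U(x)|^2\omega^2(x)<1$. Then $\mu$ satisfies a weighted Poincaré inequality with weight $\omega$ and $C_{P,\omega}(\mu)\le\frac{(1+\varepsilon^{-1})C_{P,\omega}(\nu)}{1-s}$.
   Context: A probability measure $\mu$ satisfies a weighted Poincaré inequality with weight $\omega\ge0$ and constant $C_{P,\omega}(\mu)$ if for all smooth $f$, $\mathrm{Var}_\mu(f)\le C_{P,\omega}(\mu)\int|\nabla f|^2\omega^2d\mu$. *)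

(* Defs.v *)
From HB Require Import structures.
From mathcomp Require Import all_boot all_order all_algebra.
From mathcomp Require Import all_classical all_reals all_analysis.
Set Implicit Arguments.
Unset Strict Implicit.
Unset Printing Implicit Defensive.
Import Order.TTheory GRing.Theory Num.Theory.
Import numFieldNormedType.Exports.
Local Open Scope classical_set_scope.
Local Open Scope ring_scope.

(* R^d is represented, for calculus, by the normed space 'rV[R]_d, and,
   for measure theory, by d.-tuple R (equipped with the product Borel
   sigma-algebra of the library). *)
Definition rv_of (R : realType) (d : nat) (t : d.-tuple R) : 'rV[R]_d :=
  \row_(i < d) tnth t i.

Definition basis_vec (R : realType) (d : nat) (i : 'I_d) : 'rV[R]_d :=
  delta_mx 0 i.

Definition partial (R : realType) (d : nat) (i : 'I_d)
  (f : 'rV[R]_d -> R) (x : 'rV[R]_d) : R := 'D_(basis_vec R i) f x.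

Definition grad_norm2 (R : realType) (d : nat) (f : 'rV[R]_d -> R)
  (x : 'rV[R]_d) : R := \sum_(i < d) (partial i f x) ^+ 2.

Fixpoint Ck (R : realType) (d : nat) (k : nat) (f : 'rV[R]_d -> R) : Prop :=
  match k with
  | 0 => continuous f
  | k'.+1 => (forall x, differentiable f x) /\
             (forall i : 'I_d, Ck k' (partial i f))
  end.

Definition smooth (R : realType) (d : nat) (f : 'rV[R]_d -> R) : Prop :=
  forall k, Ck k f.

(* lam is the Lebesgue measure on R^d: it gives to every closed box its
   volume (this determines it uniquely on the Borel sets). *)
Definition is_lebesgue_measure (R : realType) (d : nat)
  (lam : {measure set (d.-tuple R) -> \bar R}) : Prop :=
  forall a b : 'I_d -> R, (forall i, a i <= b i) ->
    lam [set t | forall i, a i <= tnth t i <= b i] =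
    (\prod_(i < d) (b i - a i))%:E.

Definition dint (R : realType) (d : nat)
  (lam : {measure set (d.-tuple R) -> \bar R})
  (rho g : 'rV[R]_d -> R) : \bar R :=
  (\int[lam]_t (g (rv_of t) * rho (rv_of t))%:E)%E.

Definition dmean (R : realType) (d : nat)
  (lam : {measure set (d.-tuple R) -> \bar R})
  (rho f : 'rV[R]_d -> R) : R := fine (dint lam rho f).

Definition dvar (R : realType) (d : nat)
  (lam : {measure set (d.-tuple R) -> \bar R})
  (rho f : 'rV[R]_d -> R) : \bar R :=
  dint lam rho (fun x => (f x - dmean lam rho f) ^+ 2).

(* The probability measure rho(x) dx satisfies the weighted Poincare
   inequality with weight omega and constant C: for every smooth f
   (with finite second moment, so that the variance is defined),
   Var(f) <= C * \int |grad f|^2 omega^2 rho dx. *)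
Definition weighted_poincare (R : realType) (d : nat)
  (lam : {measure set (d.-tuple R) -> \bar R})
  (rho omega : 'rV[R]_d -> R) (C : R) : Prop :=
  forall f : 'rV[R]_d -> R, smooth f ->
    measurable_fun [set: d.-tuple R] (f \o @rv_of R d) ->
    (dint lam rho (fun x => (f x ^+ 2)%R) < +oo)%E ->
    (dvar lam rho f <= C%:E * dint lam rho (fun x => (grad_norm2 f x * omega x ^+ 2)%R))%E.

(* Main.v *)
Require Import Defs.
From HB Require Import structures.
From mathcomp Require Import all_boot all_order all_algebra.
From mathcomp Require Import all_classical all_reals all_analysis.
From mathcomp Require Import measurable_realfun.
From mathcomp Require Import ring lra.
Import Order.TTheory GRing.Theory Num.Theory.
Import numFieldNormedType.Exports.
Local Open Scope classical_set_scope.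
Local Open Scope ring_scope.
Lemma box_meas (R : realType) d (c : 'I_d -> R) (r : R) :
  measurable [set t : d.-tuple R | forall i, `|tnth t i - c i| < r].
Proof.
rewrite (_ : [set t | _] = \bigcap_(i in [set: 'I_d])
   ((@tnth _ R ^~ i) @^-1` `](c i - r), (c i + r)[%classic)); last first.
  apply/seteqP; split => t /=.
    by move=> h i _; rewrite /= in_itv /= -ltr_distl h.
  by move=> h i; have := h i I; rewrite /= in_itv /= -ltr_distl.
rewrite -[X in measurable X]setCK setC_bigcap; apply: measurableC.
apply: countable_bigcupT_measurable; first exact: countableP.
move=> i; apply: measurableC.
have := @measurable_tnth _ R d i measurableT _ (measurable_itv `](c i - r), (c i + r)[).
by rewrite setTI.
Qed.
Lemma rv_ofE (R : realType) d (t : d.-tuple R) i : rv_of t ord0 i = tnth t i.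
Proof. by rewrite /rv_of mxE. Qed.

Lemma ball_rV (R : realType) d (x y : 'rV[R]_d) (e : R) :
  0 < e -> (forall i, `|x ord0 i - y ord0 i| < e) -> ball x e y.
Proof.
move=> e0 h; split => // i j; rewrite (ord1 i).
by rewrite /ball /=.
Qed.
Lemma cont_meas (R : realType) d (h : 'rV[R]_d -> R) :
  continuous h -> measurable_fun [set: d.-tuple R] (h \o @rv_of R d).
Proof.
move=> hc; apply: (measurability _ (measurable_realfun.RGenOInfty.measurableE R)) => //.
move=> /= _ [_ [a ->] <-]; rewrite setTI.
pose cond (p : 'rV[rat]_d * nat) : Prop := forall y : 'rV[R]_d,
  (forall i, `|y ord0 i - ratr (p.1 ord0 i)| < p.2.+1%:R^-1) -> a < h y.
pose S (p : 'rV[rat]_d * nat) : set (d.-tuple R) := if pselect (cond p) then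
  [set t | forall i, `|tnth t i - ratr (p.1 ord0 i)| < p.2.+1%:R^-1] else set0.
rewrite (_ : _ @^-1` _ = \bigcup_p S p).
  apply: countable_bigcupT_measurable; first exact: countableP.
  by move=> p; rewrite /S; destruct (pselect (cond p)); [exact: box_meas|exact: measurable0].
apply/seteqP; split => t /=; last first.
  move=> [p _]; rewrite /S; case: pselect => // cp /= tp.
  rewrite in_itv /= andbT; apply: cp => i; rewrite rv_ofE; exact: tp.
rewrite in_itv /= andbT => ha.
set x := rv_of t.
have /nbhs_ballP [e e0 he] : \forall y \near x, a < h y := hc x _ (lt_nbhsr ha).
have [k hk] := @ltr_add_invr R 0 (e / 2) (divr_gt0 e0 (ltr0Sn R 1)).
rewrite add0r in hk.
have : forall i : 'I_d, exists q : rat,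
    ratr q \in `](x ord0 i - k.+1%:R^-1), (x ord0 i + k.+1%:R^-1)[.
  move=> i; apply: rat_in_itvoo.
  by rewrite ltrD2l gtrN // invr_gt0 (ltr0Sn R k).
move=> /choice [f hf].
exists (\row_i f i, k) => //; rewrite /S; case: pselect => /= [_|ncond].
  move=> i; have := hf i; rewrite in_itv /= -ltr_distl mxE -rv_ofE.
  by rewrite distrC.
exfalso; apply: ncond => y hy; apply: he; apply: ball_rV => // i.
have := hf i; rewrite in_itv /= -ltr_distl => h1.
have := hy i; rewrite /= mxE => h2.
rewrite (le_lt_trans (ler_distD (ratr (f i)) _ _)) //.
rewrite [e]splitr; apply: ltrD; apply: lt_trans hk => //.
by rewrite distrC.
by rewrite distrC.
Qed.
Section CkSec.
Variables (R : realType) (d : nat).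
Implicit Types (f g : 'rV[R]_d -> R) (i : 'I_d).

Lemma Ck_cont k f : Ck k f -> continuous f.
Proof.
case: k => [//|k] [df _] x; exact: differentiable_continuous.
Qed.

Lemma Ck_S k f : Ck k.+1 f -> Ck k f.
Proof.
elim: k f => [|k IH] f; first by move=> /Ck_cont.
by move=> [df hp]; split => // i; apply: IH; exact: hp.
Qed.

Lemma Ck_le k m f : (m <= k)%N -> Ck k f -> Ck m f.
Proof.
elim: k m => [|k IH] m; first by rewrite leqn0 => /eqP ->.
rewrite leq_eqVlt => /orP[/eqP -> //|hm] hf.
by apply: IH => //; exact: Ck_S.
Qed.

Lemma partialD i f g x : differentiable f x -> differentiable g x ->
  partial i (f + g) x = partial i f x + partial i g x.
Proof. by move=> df dg; rewrite /partial deriveD //; exact: diff_derivable. Qed.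

Lemma partialM i f g x : differentiable f x -> differentiable g x ->
  partial i (f * g) x = partial i f x * g x + f x * partial i g x.
Proof.
move=> df dg; rewrite /partial deriveM; try exact: diff_derivable.
by rewrite /GRing.scale /= addrC mulrC.
Qed.

Lemma partial_cst i (c : R) : partial i (cst c) = cst 0.
Proof. by apply/funext => x; rewrite /partial derive_cst. Qed.

Lemma Ck_cst k (c : R) : Ck k (cst c : 'rV[R]_d -> R).
Proof.
elim: k c => [|k IH] c; first exact: cst_continuous.
split; first by move=> x; exact: differentiable_cst.
by move=> i; rewrite partial_cst; exact: IH.
Qed.

Lemma Ck_add k f g : Ck k f -> Ck k g -> Ck k (f + g).
Proof.
elim: k f g => [|k IH] f g.
  by move=> /= cf cg x; apply: continuousD; [exact: cf|exact: cg].
move=> [df pf] [dg pg]; split; first by move=> x; exact: differentiableD.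
move=> i; have -> : partial i (f + g) = partial i f + partial i g.
  by apply/funext => x; rewrite partialD.
by apply: IH; [exact: pf|exact: pg].
Qed.

Lemma Ck_mul k f g : Ck k f -> Ck k g -> Ck k (f * g).
Proof.
elim: k f g => [|k IH] f g.
  by move=> /= cf cg x; apply: continuousM; [exact: cf|exact: cg].
move=> hf hg; have [df pf] := hf; have [dg pg] := hg.
split; first by move=> x; exact: differentiableM.
move=> i; have -> : partial i (f * g) = partial i f * g + f * partial i g.
  by apply/funext => x; rewrite partialM.
apply: Ck_add; apply: IH => //; [exact: pf|exact: Ck_S|exact: Ck_S|exact: pg].
Qed.

Lemma derive_expR_dir (t y : R) : 'D_t (@expR R) y = t * expR y.
Proof.
have dy : differentiable (@expR R) y.
  by apply/derivable1_diffP; exact: derivable_expR.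
rewrite deriveE // -[t]mulr1 linearZ /= -deriveE //.
by rewrite derive_val /GRing.scale /= mulr1.
Qed.

Lemma partial_exp i f x : differentiable f x ->
  partial i (expR \o f) x = expR (f x) * partial i f x.
Proof.
move=> df.
have de : differentiable (@expR R) (f x).
  by apply/derivable1_diffP; exact: derivable_expR.
rewrite /partial deriveE; last exact: differentiable_comp.
rewrite diff_comp //= -deriveE // derive_expR_dir -deriveE //.
by rewrite mulrC.
Qed.

Lemma Ck_exp k f : Ck k f -> Ck k (expR \o f).
Proof.
elim: k f => [|k IH] f.
  by move=> /= cf x; apply: continuous_comp; [exact: cf|exact: continuous_expR].
move=> hf; have [df pf] := hf.
split.
  move=> x; apply: differentiable_comp => //.
  by apply/derivable1_diffP; exact: derivable_expR.
move=> i; have -> : partial i (expR \o f) = (expR \o f) * partial i f.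
  by apply/funext => x; rewrite partial_exp.
by apply: Ck_mul; [apply: IH; exact: Ck_S|exact: pf].
Qed.

End CkSec.
Section Gen.
Context {dT : measure_display} {T : measurableType dT} {R : realType} {mu : {measure set T -> \bar R}}.
Local Notation I h := (\int[mu]_x ((h x : R)%:E))%E.
Local Notation intg h := (mu.-integrable setT (EFin \o h)).

Lemma int_bound {h k : T -> R} : measurable_fun setT h -> measurable_fun setT k ->
  (forall x, `|h x| <= k x) -> (I k < +oo)%E -> intg h.
Proof.
move=> mh mk hk ik.
have k0 x : 0 <= k x by apply: le_trans (hk x).
apply: (@le_integrable _ _ _ _ _ measurableT _ (EFin \o k)).
- exact: measurableT_comp.
- by move=> x _ /=; rewrite lee_fin (le_trans (hk x)) // ler_norm.
apply/integrableP; split; first exact: measurableT_comp.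
rewrite (eq_integral (fun x => (k x)%:E)) //.
by move=> x _ /=; rewrite ger0_norm.
Qed.

Lemma I_fin {h : T -> R} : intg h -> I h = (fine (I h))%:E.
Proof. by move=> ih; rewrite fineK //; exact: (integrable_fin_num measurableT ih). Qed.

Lemma I_lin {h1 h2 : T -> R} {a b : R} : intg h1 -> intg h2 ->
  I (fun x => a * h1 x + b * h2 x) = (a%:E * I h1 + b%:E * I h2)%E.
Proof.
move=> i1 i2.
rewrite (eq_integral (fun x => a%:E * (h1 x)%:E + b%:E * (h2 x)%:E)%E); last first.
  by move=> x _; rewrite EFinD !EFinM.
rewrite integralD //; last 2 first.
- exact: integrableZl.
- exact: integrableZl.
by rewrite !integralZl.
Qed.

Lemma intg_lin {h1 h2 : T -> R} {a b : R} : intg h1 -> intg h2 ->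
  intg (fun x => a * h1 x + b * h2 x).
Proof.
move=> i1 i2.
apply: (@eq_integrable _ _ _ mu setT measurableT (fun x => a%:E * (h1 x)%:E + b%:E * (h2 x)%:E)%E).
  by move=> x _; rewrite /= EFinD !EFinM.
by apply: integrableD => //; exact: integrableZl.
Qed.

Lemma var_le (rho F : T -> R) (m : R) : measurable_fun setT rho ->
  measurable_fun setT F -> (forall x, 0 <= rho x) -> I rho = 1%E ->
  (I (fun x => F x ^+ 2 * rho x) < +oo)%E ->
  (I (fun x => (F x - fine (I (fun x => F x * rho x))) ^+ 2 * rho x)
     <= I (fun x => (F x - m) ^+ 2 * rho x))%E.
Proof.
move=> mr mF r0 Ir IF2.
have ir : intg rho.
  apply: (int_bound mr mr) => [x|]; first by rewrite ger0_norm.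
  by rewrite Ir ltry.
have mF2 : measurable_fun setT (fun x => F x ^+ 2 * rho x).
  by apply: measurable_funM => //; exact: measurable_funX.
have i2 : intg (fun x => F x ^+ 2 * rho x).
  apply: (int_bound mF2 mF2) => // x.
  by rewrite ger0_norm // mulr_ge0 // sqr_ge0.
have i1 : intg (fun x => F x * rho x).
  apply: (int_bound (k := fun x => 1 * (F x ^+ 2 * rho x) + 1 * rho x)).
  - exact: measurable_funM.
  - by apply: measurable_funD; apply: measurable_funM => //; exact: measurable_cst.
  - move=> x; rewrite normrM (ger0_norm (r0 x)) !mul1r -[X in _ <= _ + X]mul1r -mulrDl.
    apply: ler_wpM2r => //.
    have := normr_ge0 (F x); rewrite -real_normK ?num_real //; nra.
  by rewrite I_lin // Ir (I_fin i2) mul1e mul1e -EFinD ltry.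
set a := fine (I (fun x => F x * rho x)).
have mH1 : measurable_fun setT (fun x => (F x - a) ^+ 2 * rho x).
  apply: measurable_funM => //; apply: measurable_funX.
  by apply: measurable_funB => //; exact: measurable_cst.
have i3 : intg (fun x => (F x - a) ^+ 2 * rho x).
  apply: (int_bound (k := fun x => 2 * (F x ^+ 2 * rho x) + (2 * a ^+ 2) * rho x)) => //.
  - by apply: measurable_funD; apply: measurable_funM => //; exact: measurable_cst.
  - move=> x; rewrite ger0_norm; last by rewrite mulr_ge0 // sqr_ge0.
    have := mulr_ge0 (sqr_ge0 (F x + a)) (r0 x); nra.
  by rewrite I_lin // Ir (I_fin i2) mule1 -EFinM -EFinD ltry.
set c1 := 2 * (a - m).
set c2 := - (2 * (a - m) * a) + (a - m) ^+ 2.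
have i4 : intg (fun x => c1 * (F x * rho x) + c2 * rho x) by exact: intg_lin.
rewrite [X in (_ <= X)%E](eq_integral (fun x => (1 * ((F x - a) ^+ 2 * rho x) +
   1 * (c1 * (F x * rho x) + c2 * rho x))%:E)); last first.
  move=> x _; congr (_%:E); rewrite /c1 /c2; ring.
rewrite (I_lin (a:=1) (b:=1) i3 i4) (I_lin i1 ir) Ir (I_fin i1) -/a !mul1e mule1 -!EFinM -EFinD.
apply: leeDl; rewrite lee_fin /c1 /c2.
have -> : 2 * (a - m) * a + (- (2 * (a - m) * a) + (a - m) ^+ 2) = (a - m) ^+ 2 by ring.
exact: sqr_ge0.
Qed.

Lemma int_pos_neq0 {h rho : T -> R} : measurable_fun setT h ->
  measurable_fun setT rho -> (forall x, 0 < h x) -> (forall x, 0 <= rho x) ->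
  I rho = 1%E -> I h <> 0%E.
Proof.
move=> mh mr h0 r0 Ir Ih.
have : ae_eq mu setT (EFin \o h) (cst 0%E).
  apply/(ae_eq_integral_abs mu measurableT); first exact: measurableT_comp.
  rewrite -Ih; apply: eq_integral => x _ /=.
  by rewrite gtr0_norm.
move=> [N [mN N0 sub]].
have mT0 : mu setT = 0%E.
  apply: (subset_measure0 measurableT mN) => // x _; apply: sub => /=.
  by move=> hx; move: (hx Logic.I) => [] /eqP; rewrite gt_eqF.
have := @integral_abs_eq0 _ _ _ mu setT (EFin \o rho) measurableT ((measurable_EFinP _ _).2 mr) mT0.
have -> : (\int[mu]_(x in setT) `|(EFin \o rho) x|)%E = I rho.
  by apply: eq_integral => x _ /=; rewrite ger0_norm.
by rewrite Ir => /eqP; rewrite eqe oner_eq0.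
Qed.

End Gen.
Lemma young (R : realType) (eps a b : R) : 0 < eps ->
  (a - b) ^+ 2 <= (1 + eps^-1) * a ^+ 2 + (1 + eps) * b ^+ 2.
Proof.
move=> e0.
have key : (1 + eps^-1) * a ^+ 2 + (1 + eps) * b ^+ 2 - (a - b) ^+ 2
    = (a + eps * b) ^+ 2 / eps.
  by field; rewrite gt_eqF.
rewrite -subr_ge0 key; apply: divr_ge0; [exact: sqr_ge0|exact: ltW].
Qed.

Lemma sum_young (R : realType) d (eps : R) (a b : 'I_d -> R) : 0 < eps ->
  \sum_(i < d) (a i - b i) ^+ 2 <=
  (1 + eps^-1) * \sum_(i < d) a i ^+ 2 + (1 + eps) * \sum_(i < d) b i ^+ 2.
Proof.
move=> e0; rewrite !mulr_sumr -big_split /=; apply: ler_sum => i _.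
exact: young.
Qed.

Lemma cont_sum (R : realType) d (g : 'I_d -> 'rV[R]_d -> R) :
  (forall i, continuous (g i)) -> continuous (fun x => \sum_(i < d) g i x).
Proof.
move=> hg; rewrite /index_enum /=.
elim: (Finite.enum _) => [|j s IH].
  move=> x; rewrite (_ : (fun x => _) = cst 0); first exact: cst_continuous.
  by apply/funext => y; rewrite big_nil.
rewrite (_ : (fun x => _) = g j + (fun x => \sum_(i <- s) g i x)); last first.
  by apply/funext => y; rewrite big_cons.
by move=> x; apply: continuousD; [exact: hg|exact: IH].
Qed.

Lemma grad_cont (R : realType) d (f : 'rV[R]_d -> R) : Ck 1 f -> continuous (grad_norm2 f).
Proof.
move=> [_ hp]; apply: cont_sum => i x.
have : continuous (partial i f) := hp i.
by move=> c; apply: continuousM; exact: c.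
Qed.
Theorem proposition3p2 (R : realType) (d : nat)
  (lam : {measure set (d.-tuple R) -> \bar R})
  (U W omega : 'rV[R]_d -> R) (C eps : R) :
  is_lebesgue_measure lam ->
  smooth U -> smooth W ->
  (dint lam (fun x => expR (- W x)) (fun _ => 1) = 1%E) ->
  (dint lam (fun x => expR (- (U x + W x))) (fun _ => 1) = 1%E) ->
  (forall x, 0 <= omega x) ->
  measurable_fun [set: d.-tuple R] (omega \o @rv_of R d) ->
  0 <= C ->
  weighted_poincare lam (fun x => expR (- W x)) omega C ->
  0 < eps ->
  let s := ereal_sup (range (fun x =>
             (C * ((1 + eps) / 4) * grad_norm2 U x * omega x ^+ 2)%:E)) in
  (s < 1%E)%E ->
  weighted_poincare lam (fun x => expR (- (U x + W x))) omega
    ((1 + eps^-1) * C / (1 - fine s)).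
Proof.
move=> _ sU sW Hnu Hmu om0 mom C0 PN e0 s hs f sf mf hf2.
set rv := @rv_of R d.
have mc : forall h : 'rV[R]_d -> R, continuous h ->
    measurable_fun [set: d.-tuple R] (fun t => h (rv t)).
  by move=> h hc; exact: cont_meas.
have Uc : continuous U by apply: (@Ck_cont _ _ 0%N); exact: sU.
have Wc : continuous W by apply: (@Ck_cont _ _ 0%N); exact: sW.
have fc : continuous f by apply: (@Ck_cont _ _ 0%N); exact: sf.
set rN := fun x => expR (- W x).
set rM := fun x => expR (- (U x + W x)).
set c := - (2 : R)^-1.
set E := fun x => expR (c * U x).
have rN0 x : 0 < rN x by exact: expR_gt0.
have rM0 x : 0 < rM x by exact: expR_gt0.
have E0 x : 0 < E x by exact: expR_gt0.
have E2 x : E x ^+ 2 * rN x = rM x.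
  rewrite /E /rN /rM -expRM_natl -expRD; congr expR.
  by rewrite /c; field.
have rNc : continuous rN.
  move=> x; apply: continuous_comp; last exact: continuous_expR.
  by apply: continuousN; exact: Wc.
have rMc : continuous rM.
  move=> x; apply: continuous_comp; last exact: continuous_expR.
  by apply: continuousN; apply: continuousD; [exact: Uc|exact: Wc].
have Ec : continuous E.
  move=> x; apply: continuous_comp; last exact: continuous_expR.
  by apply: continuousM; [exact: cst_continuous|exact: Uc].
have mrN : measurable_fun setT (fun t => rN (rv t)) := mc _ rNc.
have mrM : measurable_fun setT (fun t => rM (rv t)) := mc _ rMc.
have mE : measurable_fun setT (fun t => E (rv t)) := mc _ Ec.
have mF : measurable_fun setT (fun t => f (rv t)) := mc _ fc.
have INr : (\int[lam]_t (rN (rv t))%:E)%E = 1%E.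
  by rewrite -Hnu /dint; apply: eq_integral => t _; rewrite mul1r.
have IMr : (\int[lam]_t (rM (rv t))%:E)%E = 1%E.
  by rewrite -Hmu /dint; apply: eq_integral => t _; rewrite mul1r.
have iN : lam.-integrable setT (EFin \o (fun t => rN (rv t))).
  apply: (int_bound mrN mrN) => [t|]; first by rewrite ger0_norm // ltW.
  by rewrite INr ltry.
have iM : lam.-integrable setT (EFin \o (fun t => rM (rv t))).
  apply: (int_bound mrM mrM) => [t|]; first by rewrite ger0_norm // ltW.
  by rewrite IMr ltry.
have mF2M : measurable_fun setT (fun t => f (rv t) ^+ 2 * rM (rv t)).
  by apply: measurable_funM => //; exact: measurable_funX.
have iF2M : lam.-integrable setT (EFin \o (fun t => f (rv t) ^+ 2 * rM (rv t))).
  apply: (int_bound mF2M mF2M) => [t|]; last exact: hf2.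
  by rewrite ger0_norm // mulr_ge0 ?sqr_ge0 // ltW.
have iFE : lam.-integrable setT (EFin \o (fun t => f (rv t) * E (rv t) * rN (rv t))).
  apply: (int_bound (k := fun t => 1 * (f (rv t) ^+ 2 * rM (rv t)) + 1 * rN (rv t))).
  - by apply: measurable_funM => //; exact: measurable_funM.
  - by apply: measurable_funD; apply: measurable_funM => //; exact: measurable_cst.
  - move=> t; rewrite -E2 !mul1r !normrM (ger0_norm (ltW (rN0 _))) (ger0_norm (ltW (E0 _))).
    rewrite mulrA -[X in _ <= _ + X]mul1r -mulrDl; apply: ler_wpM2r; first exact: ltW.
    have := normr_ge0 (f (rv t)); have := E0 (rv t).
    rewrite -[f (rv t) ^+ 2]real_normK ?num_real //; nra.
  by rewrite I_lin // INr (I_fin iF2M) mul1e mul1e -EFinD ltry.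
have iE : lam.-integrable setT (EFin \o (fun t => E (rv t) * rN (rv t))).
  apply: (int_bound (k := fun t => 1 * rM (rv t) + 1 * rN (rv t))).
  - exact: measurable_funM.
  - by apply: measurable_funD; apply: measurable_funM => //; exact: measurable_cst.
  - move=> t; rewrite -E2 !mul1r normrM (ger0_norm (ltW (rN0 _))) (ger0_norm (ltW (E0 _))).
    rewrite -[X in _ <= _ + X]mul1r -mulrDl; apply: ler_wpM2r; first exact: ltW.
    have := E0 (rv t); nra.
  by rewrite I_lin // IMr INr -!EFinM -EFinD ltry.
set A := fine (\int[lam]_t (f (rv t) * E (rv t) * rN (rv t))%:E)%E.
set B := fine (\int[lam]_t (E (rv t) * rN (rv t))%:E)%E.
have B0 : B != 0.
  apply/eqP => B0.
  have : (\int[lam]_t (E (rv t) * rN (rv t))%:E)%E = 0%E by rewrite (I_fin iE) -/B B0.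
  apply: (int_pos_neq0 (rho := fun t => rN (rv t))) => //.
  - exact: measurable_funM.
  - by move=> t; rewrite mulr_gt0.
  - by move=> t; rewrite ltW.
set m := A / B.
pose g : 'rV[R]_d -> R := (f + cst (- m)) * (expR \o (cst c * U)).
have gE x : g x = (f x - m) * E x by [].
have sg : smooth g.
  move=> k; apply: Ck_mul.
    by apply: Ck_add; [exact: sf|exact: Ck_cst].
  by apply: Ck_exp; apply: Ck_mul; [exact: Ck_cst|exact: sU].
have gc : continuous g by apply: (@Ck_cont _ _ 0%N); exact: sg.
have mg : measurable_fun setT (g \o rv) := mc _ gc.
have Ig : dint lam rN g = 0%E.
  rewrite /dint (eq_integral (fun t => (1 * (f (rv t) * E (rv t) * rN (rv t))
      + (- m) * (E (rv t) * rN (rv t)))%:E)); last first.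
    by move=> t _; rewrite gE; congr (_%:E); ring.
  rewrite I_lin // (I_fin iFE) (I_fin iE) -/A -/B -!EFinM -EFinD /m.
  by rewrite mulNr divfK // mul1r subrr.
have mQ : measurable_fun setT (fun t => (f (rv t) - m) ^+ 2 * rM (rv t)).
  apply: measurable_funM => //; apply: measurable_funX.
  by apply: measurable_funB => //; exact: measurable_cst.
have iQ : lam.-integrable setT (EFin \o (fun t => (f (rv t) - m) ^+ 2 * rM (rv t))).
  apply: (int_bound (k := fun t => 2 * (f (rv t) ^+ 2 * rM (rv t)) + (2 * m ^+ 2) * rM (rv t))) => //.
  - by apply: measurable_funD; apply: measurable_funM => //; exact: measurable_cst.
  - move=> t; rewrite ger0_norm; last by rewrite mulr_ge0 ?sqr_ge0 // ltW.
    have := mulr_ge0 (sqr_ge0 (f (rv t) + m)) (ltW (rM0 (rv t))); nra.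
  by rewrite I_lin // IMr (I_fin iF2M) mule1 -EFinM -EFinD ltry.
set X := fine (\int[lam]_t ((f (rv t) - m) ^+ 2 * rM (rv t))%:E)%E.
have IQ : (\int[lam]_t ((f (rv t) - m) ^+ 2 * rM (rv t))%:E)%E = X%:E by rewrite (I_fin iQ).
have X0 : 0 <= X.
  rewrite -lee_fin -IQ; apply: integral_ge0 => t _.
  by rewrite lee_fin mulr_ge0 ?sqr_ge0 // ltW.
have Vg : dint lam rN (fun x => g x ^+ 2) = X%:E.
  rewrite -IQ /dint; apply: eq_integral => t _; congr (_%:E).
  by rewrite gE exprMn -mulrA E2.
have P1 := PN g sg mg (eq_ind_r (fun v => (v < +oo)%E) (ltry X) Vg).
have dvg : dvar lam rN g = X%:E.
  rewrite /dvar /dmean Ig /= -Vg /dint; apply: eq_integral => t _.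
  by rewrite subr0.
rewrite dvg in P1.
have [df _] := sf 1%N.
have [dU _] := sU 1%N.
have dcU x : differentiable (cst c * U) x.
  by apply: differentiableM => //; exact: differentiable_cst.
have dexp x : differentiable (expR \o (cst c * U)) x.
  apply: differentiable_comp => //.
  by apply/derivable1_diffP; exact: derivable_expR.
have dfm x : differentiable (f + cst (- m)) x.
  by apply: differentiableD => //; exact: differentiable_cst.
have pg i x : partial i g x = E x * (partial i f x - (f x - m) * (partial i U x / 2)).
  rewrite /g partialM // partialD // partial_exp // partialM //.
  rewrite !partial_cst /= /E /c.
  have -> : (cst (- 2^-1) * U) x = - 2^-1 * U x by [].
  have -> : (f + cst (- m)) x = f x - m by [].
  ring.
have gb x : grad_norm2 g x <= E x ^+ 2 * ((1 + eps^-1) * grad_norm2 f x +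
    (1 + eps) * ((f x - m) ^+ 2 * grad_norm2 U x / 4)).
  rewrite /grad_norm2.
  under eq_bigr do rewrite pg exprMn.
  rewrite -mulr_sumr; apply: ler_wpM2l; first exact: sqr_ge0.
  apply: le_trans (@sum_young _ _ eps (fun i => partial i f x)
    (fun i => (f x - m) * (partial i U x / 2)) e0) _.
  rewrite le_eqVlt; apply/orP; left; apply/eqP; congr (_ + _ * _).
  by rewrite mulr_sumr mulr_suml; apply: eq_bigr => i _; field.
have sge x : ((C * ((1 + eps) / 4) * grad_norm2 U x * omega x ^+ 2)%:E <= s)%E.
  by apply: ereal_sup_ubound; exists x.
have s0 : (0 <= s)%E.
  apply: le_trans (sge 0); rewrite lee_fin; apply: mulr_ge0; last exact: sqr_ge0.
  apply: mulr_ge0; last by apply: sumr_ge0 => i _; exact: sqr_ge0.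
  by apply: mulr_ge0 => //; apply: divr_ge0 => //; apply: addr_ge0 => //; exact: ltW.
have sE : s = (fine s)%:E.
  by rewrite fineK // ge0_fin_numE // (lt_le_trans hs) // leey.
set s' := fine s.
have s'0 : 0 <= s' by rewrite -lee_fin -sE.
have s'1 : s' < 1 by rewrite -lte_fin -sE.
have pw x : C * (grad_norm2 g x * omega x ^+ 2 * rN x) <=
    (C * (1 + eps^-1)) * (grad_norm2 f x * omega x ^+ 2 * rM x) +
    s' * ((f x - m) ^+ 2 * rM x).
  have h2 : C * ((1 + eps) / 4) * grad_norm2 U x * omega x ^+ 2 <= s'.
    by rewrite -lee_fin -sE.
  have h3 : C * (grad_norm2 g x * omega x ^+ 2 * rN x) <=
    C * (E x ^+ 2 * ((1 + eps^-1) * grad_norm2 f x +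
    (1 + eps) * ((f x - m) ^+ 2 * grad_norm2 U x / 4)) * omega x ^+ 2 * rN x).
    apply: ler_wpM2l => //; apply: ler_wpM2r; first exact: ltW.
    by apply: ler_wpM2r; [exact: sqr_ge0|exact: gb].
  apply: (le_trans h3).
  rewrite -(E2 x).
  have -> : C * (E x ^+ 2 * ((1 + eps^-1) * grad_norm2 f x +
    (1 + eps) * ((f x - m) ^+ 2 * grad_norm2 U x / 4)) * omega x ^+ 2 * rN x) =
    (C * (1 + eps^-1)) * (grad_norm2 f x * omega x ^+ 2 * (E x ^+ 2 * rN x)) +
    (C * ((1 + eps) / 4) * grad_norm2 U x * omega x ^+ 2) * ((f x - m) ^+ 2 * (E x ^+ 2 * rN x)) by ring.
  rewrite lerD2l; apply: ler_wpM2r => //.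
  by rewrite mulr_ge0 ?sqr_ge0 // mulr_ge0 ?sqr_ge0 // ltW.
have gn0 (h : 'rV[R]_d -> R) x : 0 <= grad_norm2 h x.
  by apply: sumr_ge0 => i _; exact: sqr_ge0.
have mom2 : measurable_fun setT (fun t => omega (rv t) ^+ 2).
  exact: measurable_funX.
have mgg : measurable_fun setT (fun t => grad_norm2 g (rv t)).
  by apply: mc; apply: grad_cont; exact: sg.
have mgf : measurable_fun setT (fun t => grad_norm2 f (rv t)).
  by apply: mc; apply: grad_cont; exact: sf.
set H0 := fun t => C * (grad_norm2 g (rv t) * omega (rv t) ^+ 2 * rN (rv t)).
set H1 := fun t => grad_norm2 f (rv t) * omega (rv t) ^+ 2 * rM (rv t).
set Q := fun t => (f (rv t) - m) ^+ 2 * rM (rv t).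
set K1 := C * (1 + eps^-1).
have mH0 : measurable_fun setT (EFin \o H0).
  apply/measurable_EFinP; apply: measurable_funM; first exact: measurable_cst.
  by apply: measurable_funM => //; exact: measurable_funM.
have mH1 : measurable_fun setT (EFin \o H1).
  by apply/measurable_EFinP; apply: measurable_funM => //; exact: measurable_funM.
have mQ' : measurable_fun setT (EFin \o Q) by exact/measurable_EFinP.
have H00 : forall t, setT t -> (0 <= (EFin \o H0) t)%E.
  move=> t _; rewrite lee_fin /H0 mulr_ge0 // mulr_ge0 ?(ltW (rN0 _)) //.
  by rewrite mulr_ge0 // sqr_ge0.
have H10 : forall t, setT t -> (0 <= (EFin \o H1) t)%E.
  move=> t _; rewrite lee_fin /H1 mulr_ge0 ?(ltW (rM0 _)) //.
  by rewrite mulr_ge0 // sqr_ge0.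
have Q0 : forall t, setT t -> (0 <= (EFin \o Q) t)%E.
  by move=> t _; rewrite lee_fin /Q mulr_ge0 ?(ltW (rM0 _)) ?sqr_ge0.
have K10 : 0 <= K1.
  by rewrite /K1 mulr_ge0 // addr_ge0 // invr_ge0 ltW.
have step1 : (C%:E * dint lam rN (fun x => (grad_norm2 g x * omega x ^+ 2)%R) =
    \int[lam]_t (EFin \o H0) t)%E.
  rewrite /dint -ge0_integralZl_EFin //; last first.
    apply/measurable_EFinP; apply: measurable_funM => //; exact: measurable_funM.
    by move=> t _; rewrite lee_fin mulr_ge0 ?(ltW (rN0 _)) // mulr_ge0 // sqr_ge0.
have step2 : (\int[lam]_t (EFin \o H0) t <=
    \int[lam]_t ((K1%:E * (EFin \o H1) t) + (s'%:E * (EFin \o Q) t)))%E.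
  apply: ge0_le_integral => //.
  - apply: emeasurable_funD; apply: emeasurable_funM => //; exact: measurable_cst.
  - move=> t _ /=; rewrite -!EFinM -EFinD lee_fin; exact: pw.
have step3 : (\int[lam]_t ((K1%:E * (EFin \o H1) t) + (s'%:E * (EFin \o Q) t)) =
    K1%:E * dint lam rM (fun x => (grad_norm2 f x * omega x ^+ 2)%R) + (s' * X)%:E)%E.
  rewrite ge0_integralD //; last 4 first.
  - by move=> t _; rewrite mule_ge0 // H10.
  - by apply: emeasurable_funM => //; exact: measurable_cst.
  - by move=> t _; rewrite mule_ge0 // Q0.
  - by apply: emeasurable_funM => //; exact: measurable_cst.
  rewrite !ge0_integralZl_EFin // EFinM.
  have -> : (\int[lam]_x (EFin \o Q) x)%E = X%:E by rewrite -IQ.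
  by [].
have main : (X%:E <= K1%:E * dint lam rM (fun x => (grad_norm2 f x * omega x ^+ 2)%R)
    + (s' * X)%:E)%E.
  by rewrite -step3; apply: (le_trans P1); rewrite step1.
have hv : (dvar lam rM f <= X%:E)%E.
  rewrite -IQ.
  exact: (var_le (fun t => rM (rv t)) (fun t => f (rv t)) m mrM mF
    (fun t => ltW (rM0 _)) IMr hf2).
apply: (le_trans hv).
set G := dint lam rM (fun x => (grad_norm2 f x * omega x ^+ 2)%R).
have G0 : (0 <= G)%E.
  by apply: integral_ge0 => t _; rewrite lee_fin mulr_ge0 ?(ltW (rM0 _)) // mulr_ge0 // sqr_ge0.
have s'1' : 0 < 1 - s' by rewrite subr_gt0.
have main2 : (X%:E <= K1%:E * G + (s' * X)%:E)%E := main.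
clear main step3 step1.
clearbody G; move: G main2 G0 => [g0| |] main G0 //.
- have -> : (((1 + eps^-1) * C / (1 - s'))%:E * g0%:E =
      (((1 + eps^-1) * C / (1 - s')) * g0)%:E)%E by [].
  have main' : X <= K1 * g0 + s' * X.
    by rewrite -lee_fin EFinD EFinM.
  rewrite lee_fin.
  rewrite mulrAC ler_pdivlMr //.
  have -> : (1 + eps^-1) * C * g0 = K1 * g0 by rewrite /K1 (mulrC C).
  nra.
- have [C00|Cpos] := eqVneq C 0.
    rewrite C00.
    have -> : (1 + eps^-1) * 0 / (1 - s') = 0 by ring.
    rewrite mul0e lee_fin.
    have K0 : K1 = 0 by rewrite /K1 C00 mul0r.
    move: main; rewrite K0 mul0e add0e lee_fin => main.
    nra.
  have Kp : 0 < (1 + eps^-1) * C / (1 - s').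
    apply: divr_gt0; last exact: s'1'.
  apply: mulr_gt0; last by rewrite lt_neqAle eq_sym Cpos C0.
  by apply: addr_gt0 => //; rewrite invr_gt0.
  change (X%:E <= ((1 + eps^-1) * C / (1 - s'))%:E * +oo)%E.
  by rewrite mulry gtr0_sg // mul1e leey.
Qed.
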